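(* Assume $C^\top C\succ0$, and let $\gamma>0$, $\sigma>0$, $\lambda>0$. Let $X_r=(\widetilde W_r,y_r)$, $r\ge0$, be generated by the alternating scheme of the context from a feasible initial point $\widetilde W_0\in\mathcal{X}_1$, $y_0\in\mathbb{R}^{mn}_+$. Then every cluster point $z=(z_1,z_2)$ of $(X_r)$ is a coordinatewise minimizer of $\widehat H_\sigma$ with respect to the blocks $\widetilde W\in\mathbb{R}^{p^2}$ and $y\in\mathbb{R}^{mn}$, i.e. $\widehat H_\sigma(z_1+d_1,z_2)\ge\widehat H_\sigma(z)$ for all $d_1$ with $(z_1+d_1,z_2)\in\operatorname{dom}\widehat H_\sigma$, and $\widehat H_\sigma(z_1,z_2+d_2)\ge\widehat H_\sigma(z)$ for all $d_2$ with $(z_1,z_2+d_2)\in\operatorname{dom}\widehat H_\sigma$. If in addition $\widehat H_\sigma$ is regular at $z$, then $z$ is a stationary point of $\widehat H_\sigma$.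
   Context: Let $n,m,M\ge1$, $p=m+n$. For $i=1,\dots,M$ let $A_i\in\mathbb{R}^{n\times n}$, $B_{2,i}\in\mathbb{R}^{n\times m}$, $F_i=\begin{bmatrix}A_i&B_{2,i}\\0&0\end{bmatrix}$. Let $B_1\in\mathbb{R}^{n\times l}$, $C\in\mathbb{R}^{q\times n}$, $D\in\mathbb{R}^{q\times m}$ with $C^\top D=0$, $D^\top D\succ0$, $B_1B_1^\top\succ0$; $Q=\begin{bmatrix}B_1B_1^\top&0\\0&0\end{bmatrix}$, $R=\begin{bmatrix}C^\top C&0\\0&D^\top D\end{bmatrix}$, $V_1=[0,\ I_m]$, $V_2=[I_n,\ 0]$, $\Psi_i(W)=-V_2(F_iW+WF_i^\top+Q)V_2^\top$. $\mathrm{vec}$ is column-stacking; $\mathcal{P}:=V_2\otimes V_1$, so $\mathcal{P}\,\mathrm{vec}(W)=\mathrm{vec}(V_1WV_2^\top)$. $\Gamma^k_+=\{\mathrm{vec}(X):X\in\mathbb{S}^k_+\}$, $\delta_S$ the indicator of $S$, $\Omega=\{\mathrm{vec}(W):W_{ij}=0,\ 1\le i<j\le n\}$, $\mathcal{X}_1=\{\mathrm{vec}(W)\in\Gamma^p_+:\mathrm{vec}(\Psi_i(W))\in\Gamma^n_+\ \forall i,\ \mathrm{vec}(W)\in\Omega\}$, $r_1(\widetilde W)=\langle\mathrm{vec}(R),\widetilde W\rangle+\delta_{\mathcal{X}_1}(\widetilde W)$. For $x\in\mathbb{R}^{mn}$, $f_\sigma(x)=\sum_\ell(1-e^{-x_\ell/\sigma})$,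 $g_\sigma=-f_\sigma$, $g_\sigma^*$ its convex conjugate; $|\cdot|$ componentwise. Define $\widehat H_\sigma(\widetilde W,y)=r_1(\widetilde W)+\gamma g^*_\sigma(-y)+\gamma y^\top|\mathcal{P}\widetilde W|+\delta_{\mathbb{R}^{mn}_+}(y)$. Scheme: for $r=1,2,\dots$: if $r$ is odd, $\widetilde W_r=\widetilde W_{r-1}$ and $y_r=\operatorname{argmin}_{y\in\mathbb{R}^{mn}_+}\{\gamma g_\sigma^*(-y)+\gamma y^\top|\mathcal{P}\widetilde W_{r-1}|\}=\nabla f_\sigma(|\mathcal{P}\widetilde W_{r-1}|)$; if $r$ is even, $y_r=y_{r-1}$ and $\widetilde W_r\in\operatorname{argmin}_{\widetilde W\in\mathcal{X}_1}\{\langle\mathrm{vec}(R),\widetilde W\rangle+\gamma y_{r-1}^\top|\mathcal{P}\widetilde W|+\frac1{2\lambda}\|\widetilde W-\widetilde W_{r-1}\|^2\}$. Definitions: for $\phi$ on a convex set $\mathcal{D}$, $\phi'(z;d)=\liminf_{t\downarrow0}\frac{\phi(z+td)-\phi(z)}{t}$; $z$ is a stationary point if $\phi'(z;d)\ge0$ for all $d$ with $z+d\in\mathcal{D}$ (here $\mathcal{D}=\mathcal{X}_1\times\mathbb{R}^{mn}_+$). $\widehat H_\sigma$ is regular at $z$ (w.r.t. the two blocks) if $\widehat H_\sigma'(z;d)\ge0$ for every $d=(d_1,d_2)$ such that $\widehat H_\sigma'(z;(d_1,0))\ge0$ and $\widehat H_\sigma'(z;(0,d_2))\ge0$. *)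

(* Defs.v *)
From HB Require Import structures.
From mathcomp Require Import all_boot all_order all_algebra.
From mathcomp Require Import all_classical all_reals all_analysis.

Set Implicit Arguments.
Unset Strict Implicit.
Unset Printing Implicit Defensive.

Import Order.TTheory GRing.Theory Num.Theory.
Import numFieldNormedType.Exports.
Local Open Scope classical_set_scope.
Local Open Scope ring_scope.

Section Defs.
Variable R : realType.

(* column-stacking vec : 'M_(a,b) -> R^{a*b}; vec(W)_{j*a+i} = W i j *)
Definition vec (a b : nat) (W : 'M[R]_(a, b)) : 'cV[R]_(b * a) := (mxvec W^T)^T.
Definition unvec (a b : nat) (w : 'cV[R]_(b * a)) : 'M[R]_(a, b) := (vec_mx w^T)^T.

Definition dotv (k : nat) (a b : 'cV[R]_k) : R := \sum_(i < k) a i 0 * b i 0.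

Definition absv (k : nat) (x : 'cV[R]_k) : 'cV[R]_k := map_mx (fun t => `|t|) x.

Definition nonneg (k : nat) (y : 'cV[R]_k) : Prop := forall i, 0 <= y i 0.

Definition psd (k : nat) (X : 'M[R]_k) : Prop :=
  X^T = X /\ forall x : 'cV[R]_k, 0 <= (x^T *m X *m x) 0 0.
Definition posdef (k : nat) (X : 'M[R]_k) : Prop :=
  X^T = X /\ forall x : 'cV[R]_k, x != 0 -> 0 < (x^T *m X *m x) 0 0.

Definition Gamma_plus (k : nat) (w : 'cV[R]_(k * k)) : Prop :=
  exists X : 'M[R]_k, psd X /\ w = vec X.

Definition indic (T : Type) (S : T -> Prop) (x : T) : \bar R :=
  if pselect (S x) then 0%E else +oo%E.

Section Problem.
Variables (n m M l q : nat).
Variables (A : 'I_M -> 'M[R]_n) (B2 : 'I_M -> 'M[R]_(n, m)).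
Variables (B1 : 'M[R]_(n, l)) (C : 'M[R]_(q, n)) (D : 'M[R]_(q, m)).
Variables (gamma sigma : R).

(* p = n + m; the first n coordinates are the state block, the last m the input block *)
Local Notation p := (n + m)%N.

Definition Fm (i : 'I_M) : 'M[R]_p := block_mx (A i) (B2 i) 0 0.
Definition Qm : 'M[R]_p := block_mx (B1 *m B1^T) 0 0 0.
Definition Rm : 'M[R]_p := block_mx (C^T *m C) 0 0 (D^T *m D).
Definition V1 : 'M[R]_(m, p) := row_mx 0 1%:M.
Definition V2 : 'M[R]_(n, p) := row_mx 1%:M 0.

Definition Psi (i : 'I_M) (W : 'M[R]_p) : 'M[R]_n :=
  - (V2 *m (Fm i *m W + W *m (Fm i)^T + Qm) *m V2^T).

(* P = V2 (x) V1, acting by  P vec(W) = vec(V1 W V2^T) *)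
Definition Pop (w : 'cV[R]_(p * p)) : 'cV[R]_(n * m) :=
  vec (V1 *m unvec w *m V2^T).

Definition Omega (w : 'cV[R]_(p * p)) : Prop :=
  exists W : 'M[R]_p, w = vec W /\
    forall i j : 'I_p, (i < j)%N -> (j < n)%N -> W i j = 0.

Definition X1 (w : 'cV[R]_(p * p)) : Prop :=
  Gamma_plus w /\ (forall i, Gamma_plus (vec (Psi i (unvec w)))) /\ Omega w.

Definition r1 (w : 'cV[R]_(p * p)) : \bar R :=
  ((dotv (vec Rm) w)%:E + indic X1 w)%E.

Definition f_sigma (x : 'cV[R]_(n * m)) : R :=
  \sum_(k < n * m) (1 - expR (- x k 0 / sigma)).
Definition g_sigma (x : 'cV[R]_(n * m)) : R := - f_sigma x.
Definition g_sigma_conj (v : 'cV[R]_(n * m)) : \bar R :=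
  ereal_sup [set (dotv v x - g_sigma x)%:E | x in [set: 'cV[R]_(n * m)]].
Definition grad_f_sigma (x : 'cV[R]_(n * m)) : 'cV[R]_(n * m) :=
  \col_k (expR (- x k 0 / sigma) / sigma).

Definition Hhat (w : 'cV[R]_(p * p)) (y : 'cV[R]_(n * m)) : \bar R :=
  (r1 w + gamma%:E * g_sigma_conj (- y)
   + (gamma * dotv y (absv (Pop w)))%:E + indic (@nonneg _) y)%E.

Definition Hhat2 (z : 'cV[R]_(p * p) * 'cV[R]_(n * m)) : \bar R := Hhat z.1 z.2.

(* directional derivative phi'(z;d) = liminf_{t -> 0+} (phi(z+td) - phi(z))/t *)
Definition dirder (z d : 'cV[R]_(p * p) * 'cV[R]_(n * m)) : \bar R :=
  let phi := fun t : R =>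
    ((Hhat2 ((z.1 + t *: d.1)%R, (z.2 + t *: d.2)%R) - Hhat2 z) * (t^-1)%:E)%E in
  ereal_sup [set ereal_inf [set phi t | t in [set t : R | 0 < t < delta]]
            | delta in [set delta : R | 0 < delta]].

Definition Dom (z : 'cV[R]_(p * p) * 'cV[R]_(n * m)) : Prop :=
  X1 z.1 /\ nonneg z.2.

Definition stationary (z : 'cV[R]_(p * p) * 'cV[R]_(n * m)) : Prop :=
  forall d, Dom (z.1 + d.1, z.2 + d.2) -> (0 <= dirder z d)%E.

Definition regular (z : 'cV[R]_(p * p) * 'cV[R]_(n * m)) : Prop :=
  forall d : 'cV[R]_(p * p) * 'cV[R]_(n * m),
    (0 <= dirder z (d.1, 0%R))%E -> (0 <= dirder z (0%R, d.2))%E ->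
    (0 <= dirder z d)%E.

Definition W_step_obj (lambda : R) (Wprev : 'cV[R]_(p * p)) (yprev : 'cV[R]_(n * m))
    (w : 'cV[R]_(p * p)) : R :=
  dotv (vec Rm) w + gamma * dotv yprev (absv (Pop w))
  + (2 * lambda)^-1 * dotv (w - Wprev) (w - Wprev).

Definition is_scheme (lambda : R) (X : nat -> 'cV[R]_(p * p) * 'cV[R]_(n * m)) : Prop :=
  X1 (X 0%N).1 /\ nonneg (X 0%N).2 /\
  (forall r : nat, (0 < r)%N -> odd r ->
     (X r).1 = (X r.-1).1 /\ (X r).2 = grad_f_sigma (absv (Pop (X r.-1).1))) /\
  (forall r : nat, (0 < r)%N -> ~~ odd r ->
     (X r).2 = (X r.-1).2 /\ X1 (X r).1 /\
     forall w, X1 w ->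
       W_step_obj lambda (X r.-1).1 (X r.-1).2 (X r).1
       <= W_step_obj lambda (X r.-1).1 (X r.-1).2 w).

End Problem.
End Defs.

(* Main.v *)
Require Import Defs.
From HB Require Import structures.
From mathcomp Require Import all_boot all_order all_algebra.
From mathcomp Require Import all_classical all_reals all_analysis.
From mathcomp Require Import ring lra zify.
Import Order.TTheory GRing.Theory Num.Theory.
Import numFieldNormedType.Exports.
Local Open Scope classical_set_scope.
Local Open Scope ring_scope.
Set Implicit Arguments. Unset Strict Implicit.
Section S.
Variable R : realType.
Section T.
Variable T : topologicalType.
Lemma cts_cst (c : R) : continuous (fun _ : T => c).
Proof. move=> x; exact: cvg_cst. Qed.
Lemma cts_add (f g : T -> R) : continuous f -> continuous g -> continuous (fun t => f t + g t).
Proof. move=> cf cg x; exact: (@continuousD _ R^o _ f g x (cf x) (cg x)). Qed.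
Lemma cts_opp (f : T -> R) : continuous f -> continuous (fun t => - f t).
Proof. move=> cf x; exact: (@continuousN _ R^o _ f x (cf x)). Qed.
Lemma cts_mul (f g : T -> R) : continuous f -> continuous g -> continuous (fun t => f t * g t).
Proof. move=> cf cg x; exact: (@continuousM R T f g x (cf x) (cg x)). Qed.
Lemma cts_comp (f : T -> R) (g : R -> R) : continuous f -> continuous g -> continuous (fun t => g (f t)).
Proof. move=> cf cg x; apply: continuous_comp; [exact: cf| exact: cg]. Qed.
Lemma cts_sum k (F : 'I_k -> T -> R) : (forall i, continuous (F i)) -> continuous (fun t => \sum_(i < k) F i t).
Proof. move=> h; apply: continuous_big => //; exact: add_continuous. Qed.

Definition mcts a b (F : T -> 'M[R]_(a, b)) := forall i j, continuous (fun t => F t i j).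

Lemma mcts_cst a b (c : 'M[R]_(a,b)) : mcts (fun _ => c).
Proof. by move=> i j; apply: cts_cst. Qed.
Lemma mcts_add a b (F G : T -> 'M[R]_(a,b)) : mcts F -> mcts G -> mcts (fun t => F t + G t).
Proof.
move=> hF hG i j; have -> : (fun t => (F t + G t) i j) = fun t => F t i j + G t i j.
  by apply/funext => t; rewrite mxE.
exact: cts_add.
Qed.
Lemma mcts_opp a b (F : T -> 'M[R]_(a,b)) : mcts F -> mcts (fun t => - F t).
Proof.
move=> hF i j; have -> : (fun t => (- F t) i j) = fun t => - F t i j.
  by apply/funext => t; rewrite mxE.
exact: cts_opp.
Qed.
Lemma mcts_mul a b c (F : T -> 'M[R]_(a,b)) (G : T -> 'M[R]_(b,c)) :
  mcts F -> mcts G -> mcts (fun t => F t *m G t).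
Proof.
move=> hF hG i j; have -> : (fun t => (F t *m G t) i j) = fun t => \sum_k F t i k * G t k j.
  by apply/funext => t; rewrite mxE.
by apply: cts_sum => k; apply: cts_mul.
Qed.
Lemma mcts_tr a b (F : T -> 'M[R]_(a,b)) : mcts F -> mcts (fun t => (F t)^T).
Proof.
move=> hF i j; have -> : (fun t => (F t)^T i j) = fun t => F t j i.
  by apply/funext => t; rewrite mxE.
exact: hF.
Qed.
Lemma mcts_map a b (F : T -> 'M[R]_(a,b)) (g : R -> R) : mcts F -> continuous g -> mcts (fun t => map_mx g (F t)).
Proof.
move=> hF cg i j; have -> : (fun t => (map_mx g (F t)) i j) = fun t => g (F t i j).
  by apply/funext => t; rewrite mxE.
exact: cts_comp.
Qed.
Lemma mcts_vec a b (F : T -> 'M[R]_(a,b)) : mcts F -> mcts (fun t => vec (F t)).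
Proof.
move=> hF k j.
under eq_fun do rewrite /vec mxE castmxE !mxE.
exact: hF.
Qed.
Lemma mcts_unvec a b (F : T -> 'cV[R]_(b * a)) : mcts F -> mcts (fun t => unvec (F t)).
Proof.
move=> hF i j.
have -> : (fun t => unvec (F t) i j) = fun t => F t (mxvec_index j i) 0.
  by apply/funext => t; rewrite /unvec !mxE.
exact: hF.
Qed.
End T.
Lemma entry_cont a b (i : 'I_a) (j : 'I_b) : continuous (fun M : 'M[R]_(a,b) => M i j).
Proof.
move=> u A; rewrite -/(nbhs u _); move=> /nbhs_ballP[e /= e0 eA].
apply/nbhs_ballP; exists e => //= v [_ uv]; exact: eA.
Qed.
Lemma mcts_id a b : mcts (fun M : 'M[R]_(a,b) => M).
Proof. move=> i j; exact: entry_cont. Qed.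
Lemma mcts_compc (T U : topologicalType) a b (g : T -> U) (F : U -> 'M[R]_(a,b)) :
  continuous g -> mcts F -> mcts (fun t => F (g t)).
Proof. move=> cg hF i j x; exact: (continuous_comp (cg x) (hF i j (g x))). Qed.
Lemma fst_cont (T U : topologicalType) : continuous (@fst T U).
Proof. move=> x; exact: cvg_fst. Qed.
Lemma snd_cont (T U : topologicalType) : continuous (@snd T U).
Proof. move=> x; exact: cvg_snd. Qed.
End S.
Section S.
Variable R : realType.

Lemma closed_ineq (T : topologicalType) (F : set_system T) (FF : Filter F)
  (G : T -> R) z : continuous G -> cluster F z -> F [set t | G t <= 0] -> G z <= 0.
Proof.
move=> cG cz FG; rewrite leNgt; apply/negP => Gz.
have nB : nbhs z (G @^-1` [set x | 0 < x]).
  apply: (cG z); apply: open_nbhs_nbhs; split; [exact: open_gt | exact: Gz].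
have [t [/= h1 h2]] := cz _ _ FG nB.
by move: h1; rewrite leNgt h2.
Qed.

Lemma cluster_seq (T : pseudoMetricType R) (X : nat -> T) z :
  cluster (X @ \oo) z -> forall e, 0 < e -> forall N, exists r, (N <= r)%N /\ ball z e (X r).
Proof.
move=> cz e e0 N.
have hA : (X @ \oo) [set t | exists r, (N <= r)%N /\ t = X r].
  exists N => // r /= Nr; by exists r.
have hB : nbhs z (ball z e) by apply: nbhsx_ballx.
have [t [[r [Nr ->]] h]] := cz _ _ hA hB.
by exists r.
Qed.

Lemma seq_cluster (T : pseudoMetricType R) (Y : nat -> T) p :
  (forall e, 0 < e -> forall N, exists k, (N <= k)%N /\ ball p e (Y k)) ->
  cluster (Y @ \oo) p.
Proof.
move=> h A B [K _ HK] /nbhs_ballP [e e0 eB].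
have [k [Kk bk]] := h e e0 K.
exists (Y k); split; [exact: HK | exact: eB].
Qed.
End S.
Section A.
Variable R : realType.
Implicit Types a b k : nat.

Lemma vecD a b (U V : 'M[R]_(a,b)) : vec (U + V) = vec U + vec V.
Proof. by apply/matrixP => i j; rewrite !mxE !castmxE !mxE. Qed.
Lemma vecZ a b (s : R) (U : 'M[R]_(a,b)) : vec (s *: U) = s *: vec U.
Proof. by apply/matrixP => i j; rewrite !mxE !castmxE !mxE. Qed.
Lemma unvecD a b (u v : 'cV[R]_(b * a)) : unvec (u + v) = unvec u + unvec v.
Proof. by apply/matrixP => i j; rewrite !mxE. Qed.
Lemma unvecZ a b (s : R) (u : 'cV[R]_(b * a)) : unvec (s *: u) = s *: unvec u.
Proof. by apply/matrixP => i j; rewrite !mxE. Qed.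
Lemma vecK a b (u : 'cV[R]_(b * a)) : vec (unvec u) = u.
Proof. by rewrite /vec /unvec trmxK vec_mxK trmxK. Qed.
Lemma unvecK a b (U : 'M[R]_(a,b)) : unvec (vec U) = U.
Proof. by rewrite /vec /unvec trmxK mxvecK trmxK. Qed.

Lemma dotvC k (x y : 'cV[R]_k) : dotv x y = dotv y x.
Proof. by apply: eq_bigr => i _; rewrite mulrC. Qed.
Lemma dotvDr k (x y w : 'cV[R]_k) : dotv x (y + w) = dotv x y + dotv x w.
Proof. by rewrite /dotv -big_split; apply: eq_bigr => i _; rewrite mxE mulrDr. Qed.
Lemma dotvZr k s (x y : 'cV[R]_k) : dotv x (s *: y) = s * dotv x y.
Proof. by rewrite /dotv mulr_sumr; apply: eq_bigr => i _; rewrite mxE mulrCA. Qed.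
Lemma dotvNr k (x y : 'cV[R]_k) : dotv x (- y) = - dotv x y.
Proof. by rewrite -scaleN1r dotvZr mulN1r. Qed.
Lemma dotvBr k (x y w : 'cV[R]_k) : dotv x (y - w) = dotv x y - dotv x w.
Proof. by rewrite dotvDr dotvNr. Qed.
Lemma dotvDl k (x y w : 'cV[R]_k) : dotv (y + w) x = dotv y x + dotv w x.
Proof. by rewrite dotvC dotvDr !(dotvC x). Qed.
Lemma dotvZl k s (x y : 'cV[R]_k) : dotv (s *: y) x = s * dotv y x.
Proof. by rewrite dotvC dotvZr dotvC. Qed.
Lemma dotvNl k (x y : 'cV[R]_k) : dotv (- y) x = - dotv y x.
Proof. by rewrite dotvC dotvNr dotvC. Qed.
Lemma dotv0r k (x : 'cV[R]_k) : dotv x 0 = 0.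
Proof. by rewrite /dotv big1 // => i _; rewrite mxE mulr0. Qed.
Lemma dotv_ge0 k (x : 'cV[R]_k) : 0 <= dotv x x.
Proof. by apply: sumr_ge0 => i _; rewrite -expr2 sqr_ge0. Qed.
Lemma dotv_entry k (x : 'cV[R]_k) i : x i 0 ^+ 2 <= dotv x x.
Proof.
rewrite /dotv (bigD1 i) //= expr2 lerDl; apply: sumr_ge0 => j _; by rewrite -expr2 sqr_ge0.
Qed.
Lemma dotv_mono k (y u v : 'cV[R]_k) : nonneg y -> (forall i, u i 0 <= v i 0) -> dotv y u <= dotv y v.
Proof. move=> y0 uv; apply: ler_sum => i _; apply: ler_wpM2l => //. Qed.
End A.
Section A.
Variable R : realType.

Lemma prox_min (V : lmodType R) (S : V -> Prop) (phi : V -> R) (N : V -> R) c z :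
  0 <= c ->
  (forall u v t, S u -> S v -> 0 <= t <= 1 -> S (t *: u + (1 - t) *: v)) ->
  (forall u v t, S u -> S v -> 0 <= t <= 1 -> phi (t *: u + (1 - t) *: v) <= t * phi u + (1 - t) * phi v) ->
  (forall t u, N (t *: u) = t ^+ 2 * N u) -> (forall u, 0 <= N u) -> S z ->
  (forall w, S w -> phi z <= phi w + c * N (w - z)) -> forall w, S w -> phi z <= phi w.
Proof.
move=> c0 Sc phic NZ N0 Sz hz w Sw.
rewrite leNgt; apply/negP => hlt.
set d := phi z - phi w.
have d0 : 0 < d by rewrite subr_gt0.
set D := c * N (w - z).
have D0 : 0 <= D by rewrite mulr_ge0.
set t := d / (D + d).
have Dd0 : 0 < D + d by rewrite ltr_wpDl.
have t0 : 0 < t by rewrite divr_gt0.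
have t1 : t <= 1 by rewrite ler_pdivrMr // mul1r lerDr.
have t01 : 0 <= t <= 1 by rewrite (ltW t0) t1.
have := hz _ (Sc w z t Sw Sz t01).
have -> : t *: w + (1 - t) *: z - z = t *: (w - z).
  by rewrite scalerBl scale1r addrCA (addrC z) addrK scalerBr.
rewrite NZ.
have := phic w z t Sw Sz t01.
move=> h1 h2.
have h3 : phi z <= t * phi w + (1 - t) * phi z + c * (t ^+ 2 * N (w - z)) by apply: le_trans h2 _; rewrite lerD2r.
have h4 : t * d <= t ^+ 2 * D.
  rewrite /d /D; move: h3; rewrite mulrCA; lra.
have h5 : d <= t * D.
  by move: h4; rewrite expr2 -mulrA ler_pM2l.
have : t * D < d.
  rewrite /t mulrAC ltr_pdivrMr // mulrDr mulrC ltrDl //.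
  by rewrite mulr_gt0.
by rewrite ltNge h5.
Qed.
End A.
Section P.
Variable R : realType.
Variables (n m M l q : nat).
Variables (A : 'I_M -> 'M[R]_n) (B2 : 'I_M -> 'M[R]_(n, m)).
Variables (B1 : 'M[R]_(n, l)) (C : 'M[R]_(q, n)) (D : 'M[R]_(q, m)).
Variables (gamma sigma : R).
Local Notation p := (n + m)%N.
Local Notation cv := ('cV[R]_(p * p)).

Lemma PopD (u v : cv) : Pop (u + v) = Pop u + Pop v.
Proof. by rewrite /Pop unvecD mulmxDr mulmxDl vecD. Qed.
Lemma PopZ s (u : cv) : Pop (s *: u) = s *: Pop u.
Proof. by rewrite /Pop unvecZ -scalemxAr -scalemxAl vecZ. Qed.

Lemma comb_entry k (x y : 'cV[R]_k) t s i : (t *: x + s *: y) i 0 = t * x i 0 + s * y i 0.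
Proof. by rewrite !mxE. Qed.

Lemma absv_comb (u v : cv) t s : 0 <= t -> 0 <= s -> forall i,
  absv (Pop (t *: u + s *: v)) i 0 <= t * absv (Pop u) i 0 + s * absv (Pop v) i 0.
Proof.
move=> t0 s0 i; rewrite PopD !PopZ !mxE.
apply: le_trans (ler_normD _ _) _.
rewrite !normrM; by rewrite (ger0_norm t0) (ger0_norm s0).
Qed.

Lemma Gamma_plusE k (w : 'cV[R]_(k * k)) : Gamma_plus w <-> psd (unvec w).
Proof.
split; first by case=> X [hX ->]; rewrite unvecK.
by move=> h; exists (unvec w); rewrite vecK.
Qed.
Lemma Gamma_vec k (X : 'M[R]_k) : Gamma_plus (vec X) <-> psd X.
Proof. by rewrite Gamma_plusE unvecK. Qed.

Lemma psd_comb k (X Y : 'M[R]_k) t s : psd X -> psd Y -> 0 <= t -> 0 <= s -> psd (t *: X + s *: Y).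
Proof.
move=> [hX qX] [hY qY] t0 s0; split; first by rewrite linearD !linearZ /= hX hY.
move=> x; rewrite mulmxDr mulmxDl -!scalemxAr -!scalemxAl.
have := qX x; have := qY x.
set a := x^T *m X *m x; set b := x^T *m Y *m x => hb ha.
move: ha hb; rewrite !mxE => ha hb; by rewrite addr_ge0 // mulr_ge0.
Qed.

Lemma OmegaE (w : cv) : Omega w <-> forall i j : 'I_p, (i < j)%N -> (j < n)%N -> unvec w i j = 0.
Proof.
split; first by case=> W [-> h]; rewrite unvecK.
by move=> h; exists (unvec w); rewrite vecK.
Qed.

Lemma Psi_comb i (U V : 'M[R]_p) t : Psi A B2 B1 i (t *: U + (1 - t) *: V) = t *: Psi A B2 B1 i U + (1 - t) *: Psi A B2 B1 i V.
Proof.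
rewrite /Psi !scalerN -opprD; congr (- _).
set F := Fm A B2 i; set Q := Qm m B1.
have -> : F *m (t *: U + (1 - t) *: V) + (t *: U + (1 - t) *: V) *m F^T + Q =
  t *: (F *m U + U *m F^T + Q) + (1 - t) *: (F *m V + V *m F^T + Q).
  rewrite mulmxDr mulmxDl -!scalemxAr -!scalemxAl !scalerDr.
  rewrite {1}(_ : Q = t *: Q + (1 - t) *: Q); last by rewrite -scalerDl addrC subrK scale1r.
  by rewrite [X in X + _ = _]addrACA [LHS]addrACA.
by rewrite [in LHS]mulmxDr [in LHS]mulmxDl -![in LHS]scalemxAr -![in LHS]scalemxAl.
Qed.

Lemma X1_comb (u v : cv) t : X1 A B2 B1 u -> X1 A B2 B1 v -> 0 <= t <= 1 -> X1 A B2 B1 (t *: u + (1 - t) *: v).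
Proof.
move=> [gu [pu ou]] [gv [pv ov]] /andP[t0 t1].
have s0 : 0 <= 1 - t by rewrite subr_ge0.
split; [|split].
- by rewrite Gamma_plusE unvecD !unvecZ; apply: psd_comb => //; rewrite -Gamma_plusE.
- move=> i; rewrite Gamma_vec unvecD !unvecZ Psi_comb; apply: psd_comb => //; rewrite -Gamma_vec; [exact: pu| exact: pv].
- move: ou ov; rewrite !OmegaE => ou ov i j ij jn.
  have := ou i j ij jn; have := ov i j ij jn.
  by rewrite unvecD !unvecZ !mxE => -> ->; rewrite !mulr0 addr0.
Qed.

Definition phi (y : 'cV[R]_(n * m)) (w : cv) : R :=
  dotv (vec (Rm C D)) w + gamma * dotv y (absv (Pop w)).

Lemma phi_conv y (u v : cv) t : 0 <= gamma -> nonneg y -> 0 <= t <= 1 ->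
  phi y (t *: u + (1 - t) *: v) <= t * phi y u + (1 - t) * phi y v.
Proof.
move=> g0 y0 /andP[t0 t1]; have s0 : 0 <= 1 - t by rewrite subr_ge0.
rewrite /phi dotvDr !dotvZr.
have h : dotv y (absv (Pop (t *: u + (1 - t) *: v))) <= t * dotv y (absv (Pop u)) + (1 - t) * dotv y (absv (Pop v)).
  rewrite -!dotvZr -dotvDr; apply: dotv_mono => // i.
  by rewrite comb_entry; apply: absv_comb.
have := ler_wpM2l g0 h. lra.
Qed.

Lemma f_concave (a b : 'cV[R]_(n * m)) : 0 < sigma ->
  f_sigma sigma b <= f_sigma sigma a + dotv (grad_f_sigma sigma a) (b - a).
Proof.
move=> s0; rewrite /f_sigma /dotv -big_split; apply: ler_sum => k _ /=.
rewrite !mxE.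
set x := a k 0; set y := b k 0.
have e : expR (- y / sigma) = expR (- x / sigma) * expR (- ((y - x) / sigma)).
  by rewrite -expRD; congr expR; rewrite -!mulNr -mulrDl; congr (_ * _); ring.
have h := expR_ge1Dx (- ((y - x) / sigma)).
have h2 : expR (- x / sigma) * (1 + - ((y - x) / sigma)) <= expR (- y / sigma).
  by rewrite e ler_wpM2l // expR_ge0.
have -> : expR (- x / sigma) / sigma * (y - x) = expR (- x / sigma) * ((y - x) / sigma).
  by rewrite mulrAC mulrA.
move: h2; set E := expR (- x / sigma); set F := expR (- y / sigma); set u := (y - x) / sigma.
lra.
Qed.
End P.
Section Scheme.
Variable R : realType.
Variables (n m M l q : nat).
Variables (A : 'I_M -> 'M[R]_n) (B2 : 'I_M -> 'M[R]_(n, m)).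
Variables (B1 : 'M[R]_(n, l)) (C : 'M[R]_(q, n)) (D : 'M[R]_(q, m)).
Variables (gamma sigma lambda : R).
Local Notation p := (n + m)%N.
Local Notation cv := ('cV[R]_(p * p)).
Variable X : nat -> cv * 'cV[R]_(n * m).
Hypothesis hs : is_scheme A B2 B1 C D gamma sigma lambda X.
Hypothesis g0 : 0 <= gamma.
Hypothesis s0 : 0 < sigma.
Hypothesis l0 : 0 < lambda.

Definition Ef (w : cv) := dotv (vec (Rm C D)) w + gamma * f_sigma sigma (absv (Pop w)).

Lemma step_arith (a b g fa fb ya yb c dd : R) :
  a + g * yb + c * dd <= b + g * ya -> g * fb <= g * (fa + (yb - ya)) ->
  a + g * fb + c * dd <= b + g * fa.
Proof. move=> h1 h2. rewrite mulrDr mulrBr in h2. lra. Qed.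

Lemma sch_X1 r : X1 A B2 B1 (X r).1.
Proof.
case: hs => h0 [_ [hodd heven]].
elim: r => [|r IH]; first exact: h0.
case: (boolP (odd r.+1)) => o.
  by have [-> _] := hodd r.+1 isT o.
by have [_ [h _]] := heven r.+1 isT o.
Qed.

Lemma sch_y r : (X r.+1).2 = grad_f_sigma sigma (absv (Pop (X r).1)).
Proof.
case: hs => h0 [_ [hodd heven]].
case: (boolP (odd r.+1)) => o; first by have [_ ->] := hodd r.+1 isT o.
have [-> _] := heven r.+1 isT o.
case: r o => [//|r] o /=.
have o' : odd r.+1 by move: o => /=; rewrite negbK.
by have [-> ->] := hodd r.+1 isT o'.
Qed.

Lemma sch_step r : Ef (X r.+1).1 + (2 * lambda)^-1 * dotv ((X r.+1).1 - (X r).1) ((X r.+1).1 - (X r).1) <= Ef (X r).1.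
Proof.
have hs' := hs; case: hs' => h0 [_ [hodd heven]].
case: (boolP (odd r.+1)) => o.
  have [-> _] := hodd r.+1 isT o.
  by rewrite subrr dotv0r mulr0 addr0.
have [ey [_ hmin]] := heven r.+1 isT o.
have hy : (X r).2 = grad_f_sigma sigma (absv (Pop (X r).1)).
  case: r o ey hmin => [//|r] o ey hmin.
  have o' : odd r.+1 by move: o => /=; rewrite negbK.
  by have [-> ->] := hodd r.+1 isT o'.
have := hmin _ (sch_X1 r); rewrite /W_step_obj subrr dotv0r mulr0 addr0 /= hy.
set Wn := (X r.+1).1; set W := (X r).1.
have hc := f_concave (absv (Pop W)) (absv (Pop Wn)) s0.
rewrite dotvBr in hc.
have := ler_wpM2l g0 hc.
rewrite /Ef.
set fa := f_sigma sigma (absv (Pop W)); set fb := f_sigma sigma (absv (Pop Wn)).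
set yb := dotv _ (absv (Pop Wn)); set ya := dotv _ (absv (Pop W)).
set dd := dotv (Wn - W) (Wn - W).
move=> H2 H1; exact: (step_arith H1 H2).
Qed.

Lemma sch_mono r s : (r <= s)%N -> Ef (X s).1 <= Ef (X r).1.
Proof.
move=> /subnK <-; elim: (s - r)%N => [|k IH]; first by rewrite add0n.
apply: le_trans IH; rewrite addSn.
apply: le_trans (sch_step (k + r)); rewrite lerDl mulr_ge0 ?dotv_ge0 //.
by rewrite invr_ge0 mulr_ge0 // ltW.
Qed.
End Scheme.
Section HH.
Variable R : realType.
Variables (n m M l q : nat).
Variables (A : 'I_M -> 'M[R]_n) (B2 : 'I_M -> 'M[R]_(n, m)).
Variables (B1 : 'M[R]_(n, l)) (C : 'M[R]_(q, n)) (D : 'M[R]_(q, m)).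
Variables (gamma sigma : R).
Local Notation p := (n + m)%N.
Local Notation cv := ('cV[R]_(p * p)).
Hypothesis g0 : 0 < gamma.
Hypothesis s0 : 0 < sigma.
Local Notation fs := (f_sigma sigma).
Local Notation grad := (grad_f_sigma sigma).

Lemma gconj_lb (y a : 'cV[R]_(n * m)) : ((fs a - dotv y a)%:E <= g_sigma_conj sigma (- y))%E.
Proof.
apply: ereal_sup_ubound; exists a => //.
by rewrite /g_sigma opprK dotvNl addrC.
Qed.

Lemma gconj_grad (a : 'cV[R]_(n * m)) : g_sigma_conj sigma (- grad a) = (fs a - dotv (grad a) a)%:E.
Proof.
apply/eqP; rewrite eq_le gconj_lb andbT.
apply: ge_ereal_sup => _ [x _ <-]; rewrite lee_fin /g_sigma opprK dotvNl.
have := f_concave a x s0; rewrite dotvBr; lra.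
Qed.

Lemma grad_nonneg (a : 'cV[R]_(n * m)) : nonneg (grad a).
Proof. by move=> i; rewrite mxE divr_ge0 // ?expR_ge0 // ltW. Qed.

Lemma indic_in T (S : T -> Prop) x : S x -> Defs.indic R S x = 0%E.
Proof. by rewrite /Defs.indic; case: pselect. Qed.
Lemma indic_out T (S : T -> Prop) x : ~ S x -> Defs.indic R S x = +oo%E.
Proof. by rewrite /Defs.indic; case: pselect. Qed.

Lemma Hhat_val (w : cv) y v : X1 A B2 B1 w -> nonneg y -> g_sigma_conj sigma (- y) = v%:E ->
  Hhat A B2 B1 C D gamma sigma w y = (dotv (vec (Rm C D)) w + gamma * v + gamma * dotv y (absv (Pop w)))%:E.
Proof.
move=> hw hy hv; rewrite /Hhat /r1 indic_in // indic_in // hv.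
by rewrite adde0 adde0.
Qed.

Lemma Hhat_out (w : cv) y v : ~ X1 A B2 B1 w -> g_sigma_conj sigma (- y) = v%:E ->
  Hhat A B2 B1 C D gamma sigma w y = +oo%E.
Proof.
move=> hw hv; rewrite /Hhat /r1 indic_out // hv.
by rewrite /Defs.indic; case: pselect.
Qed.

Lemma Hhat_W (z1 : cv) w : X1 A B2 B1 z1 ->
  (forall w, X1 A B2 B1 w -> phi C D gamma (grad (absv (Pop z1))) z1 <= phi C D gamma (grad (absv (Pop z1))) w) ->
  (Hhat A B2 B1 C D gamma sigma z1 (grad (absv (Pop z1))) <= Hhat A B2 B1 C D gamma sigma w (grad (absv (Pop z1))))%E.
Proof.
move=> hz hmin.
have hv := gconj_grad (absv (Pop z1)).
case: (pselect (X1 A B2 B1 w)) => hw.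
  rewrite (Hhat_val hz (grad_nonneg _) hv) (Hhat_val hw (grad_nonneg _) hv) lee_fin.
  have := hmin w hw; rewrite /phi; lra.
by rewrite (Hhat_out hw hv) leey.
Qed.

Lemma Hhat_Y (z1 : cv) y' : X1 A B2 B1 z1 ->
  (Hhat A B2 B1 C D gamma sigma z1 (grad (absv (Pop z1))) <= Hhat A B2 B1 C D gamma sigma z1 y')%E.
Proof.
move=> hz; set a := absv (Pop z1).
have hv := gconj_grad a.
rewrite (Hhat_val hz (grad_nonneg _) hv).
have hlb := gconj_lb y' a.
case E: (g_sigma_conj sigma (- y')) hlb => [v| |] //= hlb.
  case: (pselect (nonneg y')) => hy.
    rewrite (Hhat_val hz hy E) lee_fin.
    move: hlb; rewrite lee_fin => hlb.
    have := ler_wpM2l (ltW g0) hlb; lra.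
  rewrite /Hhat /r1 E.
  rewrite /Defs.indic; case: pselect => h1; case: pselect => h2; try exact: leey; exfalso; exact: hy.
rewrite /Hhat /r1 E gt0_muley ?lte_fin //.
rewrite /Defs.indic; case: pselect => h1; case: pselect => h2; exact: leey.
Qed.
End HH.
Section Cts2.
Variable R : realType.
Variable T : topologicalType.

Lemma cts_id_R : continuous (fun x : R => x).
Proof. by move=> x; exact: cvg_id. Qed.

Lemma cts_norm_R : continuous (fun x : R => `|x|).
Proof. exact: (@norm_continuous _ R^o). Qed.

Lemma dotv_cts k (F G : T -> 'cV[R]_k) : mcts F -> mcts G -> continuous (fun t => dotv (F t) (G t)).
Proof. move=> hF hG; apply: cts_sum => i; exact: cts_mul. Qed.

Lemma fsig_cts k (sigma : R) (F : T -> 'cV[R]_(k)) : mcts F -> continuous (fun t => \sum_(i < k) (1 - expR (- F t i 0 / sigma))).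
Proof.
move=> hF; apply: cts_sum => i; apply: cts_add; first exact: cts_cst.
apply: cts_opp; apply: cts_comp; last exact: continuous_expR.
by apply: cts_mul; [apply: cts_opp; exact: hF| exact: cts_cst].
Qed.

Lemma absv_mcts k (F : T -> 'cV[R]_k) : mcts F -> mcts (fun t => absv (F t)).
Proof. move=> hF; apply: mcts_map => //; exact: cts_norm_R. Qed.

Lemma Pop_mcts n m (F : T -> 'cV[R]_((n + m) * (n + m))) : mcts F -> mcts (fun t => Pop (F t)).
Proof.
move=> hF; apply: mcts_vec; apply: mcts_mul; last exact: mcts_cst.
by apply: mcts_mul; [exact: mcts_cst | exact: mcts_unvec].
Qed.
End Cts2.

Section Cts3.
Variable R : realType.
Variable T : topologicalType.
Lemma grad_mcts n m (sigma : R) (F : T -> 'cV[R]_(n * m)) : mcts F -> mcts (fun t => grad_f_sigma sigma (F t)).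
Proof.
move=> hF i j; rewrite [j]ord1.
under eq_fun do rewrite mxE.
apply: cts_mul; last exact: cts_cst.
apply: cts_comp; last exact: continuous_expR.
by apply: cts_mul; [apply: cts_opp; exact: hF| exact: cts_cst].
Qed.
End Cts3.
Section Closure.
Variable R : realType.
Variable T : topologicalType.
Variables (F : set_system T) (FF : Filter F) (z : T).
Hypothesis cz : cluster F z.

Lemma psd_closed k (H : T -> 'M[R]_k) : mcts H -> F [set t | psd (H t)] -> psd (H z).
Proof.
move=> hH hF; split.
  apply/matrixP => i j; rewrite mxE; apply/eqP; rewrite -subr_eq0 -normr_le0.
  apply: (closed_ineq FF (G := fun t => `|H t j i - H t i j|)) cz _.
    apply: cts_comp; last exact: cts_norm_R.
    by apply: cts_add; [exact: hH | apply: cts_opp; exact: hH].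
  apply: filterS hF => t [ht _].
  by have := congr1 (fun M : 'M[R]_k => M i j) ht; rewrite mxE /= => ->; rewrite subrr normr0.
move=> x; rewrite -oppr_le0.
apply: (closed_ineq FF (G := fun t => - (x^T *m H t *m x) 0 0)) cz _.
  apply: cts_opp; apply: mcts_mul; last exact: mcts_cst.
  by apply: mcts_mul; [exact: mcts_cst | exact: hH].
by apply: filterS hF => t [_ q] /=; rewrite oppr_le0.
Qed.

Lemma entry0_closed a b (H : T -> 'M[R]_(a, b)) i j : mcts H -> F [set t | H t i j = 0] -> H z i j = 0.
Proof.
move=> hH hF; apply/eqP; rewrite -normr_le0.
apply: (closed_ineq FF (G := fun t => `|H t i j|)) cz _.
  by apply: cts_comp; [exact: hH | exact: cts_norm_R].
by apply: filterS hF => t /= ->; rewrite normr0.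
Qed.
End Closure.

Section Phi.
Variable R : realType.
Variable T : topologicalType.
Variables (n m q : nat) (C : 'M[R]_(q, n)) (D : 'M[R]_(q, m)) (gamma : R).
Lemma phi_cts (Y : T -> 'cV[R]_(n * m)) (W : T -> 'cV[R]_((n + m) * (n + m))) :
  mcts Y -> mcts W -> continuous (fun t => phi C D gamma (Y t) (W t)).
Proof.
move=> hY hW; apply: cts_add; first by apply: dotv_cts => //; exact: mcts_cst.
apply: cts_mul; first exact: cts_cst.
by apply: dotv_cts => //; apply: absv_mcts; apply: Pop_mcts.
Qed.
End Phi.
Section Balls.
Variable R : realType.
Variables (a b : nat).
Local Notation Z := ('cV[R]_a * 'cV[R]_b)%type.

Lemma ballR (x y e : R) : ball x e y <-> `|x - y| < e.
Proof. by rewrite /ball /=. Qed.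

Lemma ball_Z (u v : Z) e : 0 < e -> (forall i, `|u.1 i 0 - v.1 i 0| < e) -> (forall i, `|u.2 i 0 - v.2 i 0| < e) -> ball u e v.
Proof.
move=> e0 h1 h2; split; split => // i j; rewrite [j]ord1 ballR; [exact: h1 | exact: h2].
Qed.

Lemma ball_Z_inv (u v : Z) e : ball u e v -> (forall i, `|u.1 i 0 - v.1 i 0| < e) /\ (forall i, `|u.2 i 0 - v.2 i 0| < e).
Proof. by case=> [[_ h1] [_ h2]]; split => i; rewrite -ballR; [exact: h1|exact: h2]. Qed.
End Balls.
Section Arith.
Variable R : realType.
Lemma arith2 (E0 E1 E2 E3 u K eta : R) : E1 + u <= E2 -> E2 <= E3 -> E3 <= E0 - K * eta -> eta < u ->
  E1 <= E0 - (K * eta + eta).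
Proof. move=> *; lra. Qed.
Lemma arith3 (E0 E3 L K eta : R) : E3 <= E0 - K * eta -> L <= E3 -> E0 - L < K * eta -> False.
Proof. move=> *; lra. Qed.
Lemma arith4 (e d x : R) : 0 < e -> d <= e ^+ 2 / 2 -> x ^+ 2 <= d -> `|x| < e.
Proof.
move=> e0 h1 h2; rewrite ltNge; apply/negP => h.
have : e ^+ 2 <= `|x| ^+ 2 by rewrite lerXn2r // ?nnegrE ?normr_ge0 // ltW.
rewrite real_normK ?num_real // => h3; have := exprn_gt0 2 e0; lra.
Qed.
Lemma arith5 (a b c e : R) : `|a - b| < e / 2 -> `|b - c| < e / 2 -> `|a - c| < e.
Proof.
move=> h1 h2; have := ler_distD b a c; lra.
Qed.
Lemma arith6 (a b g y1 y2 c dd D : R) : a + g * y1 + c * dd <= b + g * y2 + c * D -> 0 <= c * dd ->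
  a + g * y1 - (b + g * y2 + c * D) <= 0.
Proof. move=> *; lra. Qed.
End Arith.

Section Dir.
Variable R : realType.
Variables (n m M l q : nat).
Variables (A : 'I_M -> 'M[R]_n) (B2 : 'I_M -> 'M[R]_(n, m)).
Variables (B1 : 'M[R]_(n, l)) (C : 'M[R]_(q, n)) (D : 'M[R]_(q, m)).
Variables (gamma sigma : R).
Lemma dirder_ge0 (z d : 'cV[R]_((n + m) * (n + m)) * 'cV[R]_(n * m)) v :
  Hhat A B2 B1 C D gamma sigma z.1 z.2 = v%:E ->
  (forall t, 0 < t -> (v%:E <= Hhat A B2 B1 C D gamma sigma (z.1 + t *: d.1) (z.2 + t *: d.2))%E) ->
  (0 <= dirder A B2 B1 C D gamma sigma z d)%E.
Proof.
move=> hv h; rewrite /dirder /Hhat2 /= hv.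
have h0 : (0 <= ereal_inf [set ((Hhat A B2 B1 C D gamma sigma (z.1 + t *: d.1) (z.2 + t *: d.2) - v%:E) * ((t^-1)%R)%:E)%E | t in [set t : R | (0 < t < 1)%R]])%E.
  apply: le_ereal_inf_tmp => _ [t /andP [t0 _] <-].
  apply: mule_ge0; last by rewrite lee_fin invr_ge0 ltW.
  have := h t t0; case: (Hhat _ _ _ _ _ _ _ _ _) => [r| |] hr.
  - by rewrite lee_fin in hr; rewrite -EFinB lee_fin subr_ge0.
  - exact: leey.
  - by move: hr; rewrite leeNy_eq.
apply: le_trans h0 _; apply: ereal_sup_ubound; exists 1 => //=; exact: ltr01.
Qed.
End Dir.

Unset Implicit Arguments.

Theorem theorem28 (R : realType) (n m M l q : nat)
  (A : 'I_M -> 'M[R]_n) (B2 : 'I_M -> 'M[R]_(n, m))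
  (B1 : 'M[R]_(n, l)) (C : 'M[R]_(q, n)) (D : 'M[R]_(q, m))
  (gamma sigma lambda : R)
  (X : nat -> 'cV[R]_((n + m) * (n + m)) * 'cV[R]_(n * m))
  (z : 'cV[R]_((n + m) * (n + m)) * 'cV[R]_(n * m)) :
  (0 < n)%N -> (0 < m)%N -> (0 < M)%N ->
  C^T *m D = 0 ->
  posdef (D^T *m D) -> posdef (B1 *m B1^T) -> posdef (C^T *m C) ->
  0 < gamma -> 0 < sigma -> 0 < lambda ->
  is_scheme A B2 B1 C D gamma sigma lambda X ->
  cluster (X @ \oo) z ->
  (forall d1, (Hhat A B2 B1 C D gamma sigma (z.1 + d1) z.2 < +oo)%E ->
     (Hhat A B2 B1 C D gamma sigma z.1 z.2
      <= Hhat A B2 B1 C D gamma sigma (z.1 + d1) z.2)%E) /\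
  (forall d2, (Hhat A B2 B1 C D gamma sigma z.1 (z.2 + d2) < +oo)%E ->
     (Hhat A B2 B1 C D gamma sigma z.1 z.2
      <= Hhat A B2 B1 C D gamma sigma z.1 (z.2 + d2))%E) /\
  (regular A B2 B1 C D gamma sigma z -> stationary A B2 B1 C D gamma sigma z).
Proof.
move=> _ _ _ _ _ _ _ g0 s0 l0 hs cz.
have g0' : 0 <= gamma by exact: ltW.
set c := (2 * lambda)^-1.
have c0 : 0 < c by rewrite invr_gt0 mulr_gt0.
have m1 : mcts (fun t : 'cV[R]_((n + m) * (n + m)) * 'cV[R]_(n * m) => t.1).
  exact: (mcts_compc (@fst_cont _ _) (@mcts_id R _ _)).
have m2 : mcts (fun t : 'cV[R]_((n + m) * (n + m)) * 'cV[R]_(n * m) => t.2).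
  exact: (mcts_compc (@snd_cont _ _) (@mcts_id R _ _)).
have Xle : forall G : 'cV[R]_((n + m) * (n + m)) * 'cV[R]_(n * m) -> R, continuous G -> (forall r, G (X r) <= 0) -> G z <= 0.
  move=> G cG h; apply: (closed_ineq _ cG cz); exists 0%N => // r _; exact: h r.
have Ects : continuous (fun t : 'cV[R]_((n + m) * (n + m)) * 'cV[R]_(n * m) => Ef C D gamma sigma t.1).
  rewrite /Ef /f_sigma; apply: cts_add; first by apply: dotv_cts => //; exact: mcts_cst.
  apply: cts_mul; first exact: cts_cst.
  by apply: fsig_cts; apply: absv_mcts; apply: Pop_mcts.
have hlow : forall r, Ef C D gamma sigma z.1 <= Ef C D gamma sigma (X r).1.
  move=> r; rewrite -subr_le0.
  apply: (closed_ineq _ (G := fun t => Ef C D gamma sigma t.1 - Ef C D gamma sigma (X r).1)) cz _.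
    by apply: cts_add => //; exact: cts_cst.
  exists r => // s /= rs; rewrite subr_le0; exact: (sch_mono hs g0' s0 l0 rs).
pose dd r := dotv ((X r.+1).1 - (X r).1) ((X r.+1).1 - (X r).1).
have hdelta : forall eta, 0 < eta -> exists N, forall r, (N <= r)%N -> c * dd r <= eta.
  move=> eta eta0; case: (pselect (exists N, forall r, (N <= r)%N -> c * dd r <= eta)) => // hno.
  have hinf : forall N, exists r, (N <= r)%N /\ eta < c * dd r.
    move=> N; apply: contrapT => hN; apply: hno; exists N => r Nr.
    rewrite leNgt; apply/negP => h; apply: hN; by exists r.
  have hK : forall K : nat, exists s, Ef C D gamma sigma (X s).1 <= Ef C D gamma sigma (X 0%N).1 - K%:R * eta.
    elim => [|K [s hs']].
      exists 0%N. rewrite mul0r. rewrite subr0. exact: lexx.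
    have [r [sr hr]] := hinf s; exists r.+1.
    have h1 := sch_step hs g0' s0 r; have h2 := sch_mono hs g0' s0 l0 sr.
    rewrite -/(dd r) -/c in h1.
    rewrite -natr1 mulrDl mul1r.
    exact: (arith2 h1 h2 hs' hr).
  set L := Ef C D gamma sigma z.1; set E0 := Ef C D gamma sigma (X 0%N).1.
  have [s hsK] := hK (Num.truncn ((E0 - L) / eta)).+1.
  have hT := truncnS_gt ((E0 - L) / eta).
  have := hlow s; rewrite -/L => hL.
  move: hT; rewrite ltr_pdivrMr // => hT.
  by have := arith3 hsK hL hT.
have hent : forall e, 0 < e -> exists N, forall r, (N <= r)%N -> forall i, `|(X r.+1).1 i 0 - (X r).1 i 0| < e.
  move=> e e0.
  have [N hN] := hdelta (c * (e ^+ 2 / 2)) (mulr_gt0 c0 (divr_gt0 (exprn_gt0 2 e0) (ltr0Sn _ 1))).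
  exists N => r Nr i.
  have h1 := hN r Nr; rewrite ler_pM2l // in h1.
  have h2 := dotv_entry ((X r.+1).1 - (X r).1) i; rewrite -/(dd r) !mxE in h2.
  exact: (arith4 e0 h1 h2).
pose Y k := (X k.*2.+2, X k.*2.+1).
have hev : forall r, ~~ odd r -> (0 < r)%N -> (X r).2 = (X r.-1).2.
  move=> r o r0; case: hs => _ [_ [_ he]]; by have [-> _] := he r r0 o.
have cY : cluster (Y @ \oo) (z, z).
  apply: seq_cluster => e e0 N.
  have e20 : 0 < e / 2 by rewrite divr_gt0.
  have [N1 hN1] := hent _ e20.
  have [r [hr hb]] := cluster_seq cz e20 (N1 + N.*2 + 2).
  have [hb1 hb2] := ball_Z_inv hb.
  case: (boolP (odd r)) => o.
  - exists r./2; split.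
      move: hr o; rewrite -[in X in (_ <= X)%N](odd_double_half r) => hr o; rewrite o in hr.
      rewrite -!muln2 in hr *; lia.
    have er : (r./2).*2.+1 = r by rewrite -[RHS](odd_double_half r) o.
    have ee : e / 2 <= e by rewrite ler_pdivrMr // ler_pMr // ler1n.
    rewrite /Y er; split; last exact: (le_ball ee hb).
    apply: ball_Z => // i /=.
      apply: (arith5 (hb1 i)); rewrite distrC; apply: hN1; lia.
    have -> : (X r.+1).2 = (X r).2 by apply: (hev r.+1) => //=; rewrite o.
    exact: (lt_le_trans (hb2 i) ee).
  - have r0 : (0 < r)%N by lia.
    exists (r./2).-1; split.
      move: hr o; rewrite -[in X in (_ <= X)%N](odd_double_half r) => hr o; rewrite (negbTE o) in hr.
      rewrite -!muln2 in hr *; lia.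
    have er : ((r./2).-1).*2.+2 = r.
      rewrite -[RHS](odd_double_half r) (negbTE o) add0n.
      have h2 : (0 < r./2)%N.
        move: hr o; rewrite -[in X in (_ <= X)%N](odd_double_half r) => hr o; rewrite (negbTE o) in hr.
        rewrite -!muln2 in hr *; lia.
      by rewrite -[in RHS](prednK h2) doubleS.
    have ee : e / 2 <= e by rewrite ler_pdivrMr // ler_pMr // ler1n.
    rewrite /Y er; split; first exact: (le_ball ee hb).
    have er' : ((r./2).-1).*2.+1 = r.-1 by rewrite -[in RHS]er.
    rewrite er'.
    apply: ball_Z => // i /=.
      apply: (arith5 (hb1 i)); have := hN1 r.-1 _; rewrite prednK //; apply; lia.
    rewrite -(hev r o r0).
    exact: (lt_le_trans (hb2 i) ee).
have FX1 : (X @ \oo) [set t | X1 A B2 B1 t.1] by exists 0%N => // r _; exact: sch_X1 hs r.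
have hz1 : X1 A B2 B1 z.1.
  split; [|split].
  - rewrite Gamma_plusE.
    apply: (psd_closed _ cz (H := fun t => unvec t.1)); first exact: mcts_unvec.
    by apply: filterS FX1 => t [ht _]; apply/Gamma_plusE.
  - move=> i; rewrite Gamma_vec.
    apply: (psd_closed _ cz (H := fun t => Psi A B2 B1 i (unvec t.1))).
      rewrite /Psi; apply: mcts_opp; apply: mcts_mul; last exact: mcts_cst.
      apply: mcts_mul; first exact: mcts_cst.
      apply: mcts_add; last exact: mcts_cst.
      apply: mcts_add; apply: mcts_mul; try exact: mcts_cst; exact: mcts_unvec.
    by apply: filterS FX1 => t [_ [ht _]]; apply/Gamma_vec.
  - rewrite OmegaE => i j ij jn.
    apply: (entry0_closed _ cz (H := fun t => unvec t.1)); first exact: mcts_unvec.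
    by apply: filterS FX1 => t [_ [_ ht]]; move: ht; rewrite OmegaE => ht; exact: ht.
have m11 : mcts (fun ts : ('cV[R]_((n + m) * (n + m)) * 'cV[R]_(n * m)) * ('cV[R]_((n + m) * (n + m)) * 'cV[R]_(n * m)) => ts.1.1).
  exact: (mcts_compc (@fst_cont _ _) m1).
have m12 : mcts (fun ts : ('cV[R]_((n + m) * (n + m)) * 'cV[R]_(n * m)) * ('cV[R]_((n + m) * (n + m)) * 'cV[R]_(n * m)) => ts.1.2).
  exact: (mcts_compc (@fst_cont _ _) m2).
have m21 : mcts (fun ts : ('cV[R]_((n + m) * (n + m)) * 'cV[R]_(n * m)) * ('cV[R]_((n + m) * (n + m)) * 'cV[R]_(n * m)) => ts.2.1).
  exact: (mcts_compc (@snd_cont _ _) m1).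
have hz2 : z.2 = grad_f_sigma sigma (absv (Pop z.1)).
  apply/matrixP => i j; rewrite [j]ord1; apply/eqP; rewrite -subr_eq0 -normr_le0.
  apply: (closed_ineq _ (G := fun ts : ('cV[R]_((n + m) * (n + m)) * 'cV[R]_(n * m)) * ('cV[R]_((n + m) * (n + m)) * 'cV[R]_(n * m)) =>
      `|ts.1.2 i 0 - grad_f_sigma sigma (absv (Pop ts.2.1)) i 0|) _ cY).
    apply: cts_comp; last exact: cts_norm_R.
    apply: cts_add; first exact: m12.
    apply: cts_opp; apply: grad_mcts; apply: absv_mcts; apply: Pop_mcts; exact: m21.
  exists 0%N => // k _ /=; rewrite (sch_y hs) subrr normr0; exact: lexx.
have hprox : forall w, X1 A B2 B1 w -> phi C D gamma z.2 z.1 <= phi C D gamma z.2 w + c * dotv (w - z.1) (w - z.1).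
  move=> w hw; rewrite -subr_le0.
  apply: (closed_ineq _ (G := fun ts : ('cV[R]_((n + m) * (n + m)) * 'cV[R]_(n * m)) * ('cV[R]_((n + m) * (n + m)) * 'cV[R]_(n * m)) =>
      phi C D gamma ts.1.2 ts.1.1 - (phi C D gamma ts.1.2 w + c * dotv (w - ts.2.1) (w - ts.2.1))) _ cY).
    apply: cts_add; first exact: phi_cts.
    apply: cts_opp; apply: cts_add; first by apply: phi_cts => //; exact: mcts_cst.
    apply: cts_mul; first exact: cts_cst.
    by apply: dotv_cts; apply: mcts_add; try exact: mcts_cst; apply: mcts_opp.
  exists 0%N => // k _ /=.
  case: hs => _ [_ [_ he]].
  have ev : ~~ odd k.*2.+2 by rewrite /= negbK odd_double.
  have [ey [_ hmin]] := he k.*2.+2 isT ev.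
  have := hmin w hw; rewrite /W_step_obj /= -ey -/c /phi => h.
  exact: (arith6 h (mulr_ge0 (ltW c0) (dotv_ge0 _))).
have hz2nn : nonneg z.2 by rewrite hz2; apply: (grad_nonneg s0).
have NZ : forall t (u : 'cV[R]_((n + m) * (n + m))), dotv (t *: u) (t *: u) = t ^+ 2 * dotv u u.
  by move=> t u; rewrite dotvZl dotvZr mulrA expr2.
have hmin : forall w, X1 A B2 B1 w -> phi C D gamma z.2 z.1 <= phi C D gamma z.2 w.
  apply: (prox_min (S := X1 A B2 B1) (phi := phi C D gamma z.2) (N := fun u => dotv u u) (ltW c0)) => //.
  - by move=> u v t hu hv ht; exact: X1_comb.
  - by move=> u v t hu hv ht; exact: phi_conv.
  - by move=> u; exact: dotv_ge0.
have P1 : forall w, (Hhat A B2 B1 C D gamma sigma z.1 z.2 <= Hhat A B2 B1 C D gamma sigma w z.2)%E.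
  move=> w; rewrite hz2; apply: (Hhat_W s0 _ hz1); by rewrite -hz2.
have P2 : forall y, (Hhat A B2 B1 C D gamma sigma z.1 z.2 <= Hhat A B2 B1 C D gamma sigma z.1 y)%E.
  move=> y; rewrite hz2; exact: (Hhat_Y C D g0 s0 _ hz1).
have [v hv] : exists v, Hhat A B2 B1 C D gamma sigma z.1 z.2 = v%:E.
  rewrite hz2; eexists; exact: (Hhat_val C D gamma hz1 (grad_nonneg s0 _) (gconj_grad s0 _)).
split; first by move=> d1 _; exact: P1.
split; first by move=> d2 _; exact: P2.
move=> hreg d hdom; apply: hreg.
- apply: (dirder_ge0 hv) => t t0 /=; rewrite scaler0 addr0 -hv; exact: P1.
- apply: (dirder_ge0 hv) => t t0 /=; rewrite scaler0 addr0 -hv; exact: P2.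
Qed.
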